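(* Let $\mathfrak g$ be a $3$-dimensional complex vector space. Every non-degenerate product $\mu$ on $\mathfrak g$ is equivalent (under the $\operatorname{GL}(\mathfrak g)$-action) to exactly one of the products whose matrices, in a suitable basis, are $$\mu_{1;a}=\begin{pmatrix}1&0&0\\0&1&-a\\0&a&1\end{pmatrix}\ (a\in\mathbb C\setminus\{0\}),\qquad \mu_2=\mathbb 1_3,\qquad \mu_3=\begin{pmatrix}0&1&0\\1&0&-1\\0&1&1\end{pmatrix}.$$ Moreover, $\mu_{1;a}$ is equivalent to $\mu_{1;a'}$ if and only if $a=\pm a'$.
   Context: A product on a complex vector space $\mathfrak g$ is a skew-symmetric bilinear map $\mu:\mathfrak g\times\mathfrak g\to\mathfrak g$. Given a basis $\{e_1,e_2,e_3\}$, the matrix $M_\mu=(\mu_{ij})$ of $\mu$ is defined by $\mu(e_2,e_3)=\sum_i\mu_{i1}e_i$, $\mu(e_3,e_1)=\sum_i\mu_{i2}e_i$, $\mu(e_1,e_2)=\sum_i\mu_{i3}e_i$; this gives a bijection between products and $3\times 3$ complex matrices. $\operatorname{GL}(\mathfrak g)$ acts on products by $(g\cdot\mu)(x,y)=g(\mu(g^{-1}x,g^{-1}y))$, and in matrix terms $M_{g\cdot\mu}=(\det g)^{-1}gM_\mu g^t$; two products are equivalent if they lie in the same orbit. The product $\mu$ is called non-degenerate if the symmetric part $\tfrac12(M_\mu+M_\mu^t)$ of its matrix is an invertible matrix, and degenerate otherwise. *)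

(* Defs.v *)
(* The complex field is modelled by an arbitrary
   C : numClosedFieldType (algebraically closed, characteristic 0). *)
From HB Require Import structures.
From mathcomp Require Import all_boot all_order all_algebra.
Set Implicit Arguments. Unset Strict Implicit. Unset Printing Implicit Defensive.
Import Order.TTheory GRing.Theory Num.Theory.
Local Open Scope ring_scope.

(* A product on C^3 is identified with its matrix M_mu (a 3x3 matrix). *)

Definition mx3 (C : numClosedFieldType) (r : seq (seq C)) : 'M[C]_3 :=
  \matrix_(i < 3, j < 3) nth 0 (nth [::] r i) j.

Definition prod_act (C : numClosedFieldType) (g M : 'M[C]_3) : 'M[C]_3 :=
  (\det g)^-1 *: (g *m M *m g^T).

Definition prod_equiv (C : numClosedFieldType) (M N : 'M[C]_3) : Prop :=
  exists g : 'M[C]_3, g \in unitmx /\ N = prod_act g M.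

Definition prod_nondeg (C : numClosedFieldType) (M : 'M[C]_3) : bool :=
  (2%:R^-1 *: (M + M^T)) \in unitmx.

Definition mu1 (C : numClosedFieldType) (a : C) : 'M[C]_3 :=
  mx3 [:: [:: 1; 0; 0]; [:: 0; 1; - a]; [:: 0; a; 1]].

Definition mu2 (C : numClosedFieldType) : 'M[C]_3 := 1%:M.

Definition mu3 (C : numClosedFieldType) : 'M[C]_3 :=
  mx3 [:: [:: 0; 1; 0]; [:: 1; 0; -1]; [:: 0; 1; 1]].

(* Main.v *)
Require Import Defs.
From HB Require Import structures.
From mathcomp Require Import all_boot all_order all_algebra ring.
Import GRing.Theory Num.Theory.
Set Implicit Arguments. Unset Strict Implicit. Unset Printing Implicit Defensive.
Local Open Scope ring_scope.


Definition i0 : 'I_3 := @Ordinal 3 0 isT.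
Definition i1 : 'I_3 := @Ordinal 3 1 isT.
Definition i2 : 'I_3 := @Ordinal 3 2 isT.

Ltac ord3 i := case: i => [[|[|[|?]]] ?] //=.

Lemma mx3_eta (C : numClosedFieldType) (M : 'M[C]_3) :
  M = mx3 [:: [:: M i0 i0; M i0 i1; M i0 i2]; [:: M i1 i0; M i1 i1; M i1 i2];
              [:: M i2 i0; M i2 i1; M i2 i2]].
Proof.
apply/matrixP => i j; rewrite mxE.
by ord3 i; ord3 j; congr (M _ _); apply: val_inj.
Qed.

Lemma mx3_congr (C : numClosedFieldType) (a b c d e f g h k a' b' c' d' e' f' g' h' k' : C) :
  a = a' -> b = b' -> c = c' -> d = d' -> e = e' -> f = f' -> g = g' -> h = h' -> k = k' ->
  mx3 [:: [:: a; b; c]; [:: d; e; f]; [:: g; h; k]] =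
  mx3 [:: [:: a'; b'; c']; [:: d'; e'; f']; [:: g'; h'; k']].
Proof. by move=> -> -> -> -> -> -> -> -> ->. Qed.

Lemma mul_mx3 (C : numClosedFieldType) (a b c d e f g h k a' b' c' d' e' f' g' h' k' : C) :
  mx3 [:: [:: a; b; c]; [:: d; e; f]; [:: g; h; k]] *m
  mx3 [:: [:: a'; b'; c']; [:: d'; e'; f']; [:: g'; h'; k']] =
  mx3 [:: [:: a*a' + b*d' + c*g'; a*b' + b*e' + c*h'; a*c' + b*f' + c*k'];
          [:: d*a' + e*d' + f*g'; d*b' + e*e' + f*h'; d*c' + e*f' + f*k'];
          [:: g*a' + h*d' + k*g'; g*b' + h*e' + k*h'; g*c' + h*f' + k*k']].
Proof.
apply/matrixP => i j; rewrite !mxE !big_ord_recl big_ord0 !mxE /=.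
ord3 i; ord3 j; rewrite /bump /=; ring.
Qed.

Lemma tr_mx3 (C : numClosedFieldType) (a b c d e f g h k : C) :
  (mx3 [:: [:: a; b; c]; [:: d; e; f]; [:: g; h; k]])^T =
  mx3 [:: [:: a; d; g]; [:: b; e; h]; [:: c; f; k]].
Proof. by apply/matrixP => i j; rewrite !mxE; ord3 i; ord3 j. Qed.

Lemma add_mx3 (C : numClosedFieldType) (a b c d e f g h k a' b' c' d' e' f' g' h' k' : C) :
  mx3 [:: [:: a; b; c]; [:: d; e; f]; [:: g; h; k]] +
  mx3 [:: [:: a'; b'; c']; [:: d'; e'; f']; [:: g'; h'; k']] =
  mx3 [:: [:: a+a'; b+b'; c+c']; [:: d+d'; e+e'; f+f']; [:: g+g'; h+h'; k+k']].
Proof. by apply/matrixP => i j; rewrite !mxE; ord3 i; ord3 j. Qed.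

Lemma scale_mx3 (C : numClosedFieldType) (x a b c d e f g h k : C) :
  x *: mx3 [:: [:: a; b; c]; [:: d; e; f]; [:: g; h; k]] =
  mx3 [:: [:: x*a; x*b; x*c]; [:: x*d; x*e; x*f]; [:: x*g; x*h; x*k]].
Proof. by apply/matrixP => i j; rewrite !mxE; ord3 i; ord3 j. Qed.

Lemma det_mx3 (C : numClosedFieldType) (a b c d e f g h k : C) :
  \det (mx3 [:: [:: a; b; c]; [:: d; e; f]; [:: g; h; k]]) =
  a*e*k - a*f*h - b*d*k + b*f*g + c*d*h - c*e*g.
Proof.
rewrite (expand_det_row _ ord0) !big_ord_recl big_ord0 /cofactor.
rewrite !(expand_det_row _ ord0) !big_ord_recl !big_ord0 /cofactor.
rewrite !det_mx11 !mxE /= /bump /=; ring.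
Qed.

Lemma id_mx3 (C : numClosedFieldType) :
  (1%:M : 'M[C]_3) = mx3 [:: [:: 1; 0; 0]; [:: 0; 1; 0]; [:: 0; 0; 1]].
Proof. by apply/matrixP => i j; rewrite !mxE; ord3 i; ord3 j. Qed.




Lemma trmxZ (C : numClosedFieldType) (a : C) (A : 'M[C]_3) : (a *: A)^T = a *: A^T.
Proof. exact: linearZ. Qed.

Definition R (C : numClosedFieldType) (M N : 'M[C]_3) :=
  exists g (l : C), [/\ g \in unitmx, l != 0 & g *m M *m g^T = l *: N].

Lemma RtoE (C : numClosedFieldType) (M N : 'M[C]_3) : R M N -> prod_equiv M N.
Proof.
move=> [g [l [gu l0 E]]].
have d0 : \det g != 0 by rewrite -unitfE -unitmxE.
set c := l / \det g.
have c0 : c != 0 by rewrite mulf_neq0 // invr_eq0.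
exists (c *: g); split.
  by rewrite unitmxE detZ unitfE mulf_neq0 // expf_neq0.
rewrite /prod_act detZ trmxZ -!scalemxAl -scalemxAr E !scalerA.
rewrite -[N in N = _]scale1r; congr (_ *: _).
rewrite /c; field. apply/andP; split. exact: d0. exact: l0.
Qed.

Lemma R_trans (C : numClosedFieldType) (M N P : 'M[C]_3) : R M N -> R N P -> R M P.
Proof.
move=> [g [l [gu l0 E]]] [h [m [hu m0 F]]].
exists (h *m g), (l * m); split.
- by rewrite unitmx_mul gu hu.
- by rewrite mulf_neq0.
rewrite trmx_mul !mulmxA -(mulmxA h) -(mulmxA h) E -scalemxAr -scalemxAl F.
by rewrite scalerA.
Qed.

Lemma R_self (C : numClosedFieldType) (M g : 'M[C]_3) : g \in unitmx -> R M (g *m M *m g^T).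
Proof. move=> gu; exists g, 1; split => //; [exact: oner_neq0 | by rewrite scale1r]. Qed.

Lemma R_nondeg (C : numClosedFieldType) (M N : 'M[C]_3) :
  R M N -> \det (M + M^T) != 0 -> \det (N + N^T) != 0.
Proof.
move=> [g [l [gu l0 E]]] dM.
have d0 : \det g != 0 by rewrite -unitfE -unitmxE.
have E2 : g *m (M + M^T) *m g^T = l *: (N + N^T).
  rewrite mulmxDr mulmxDl E scalerDr; congr (_ + _).
  by rewrite -trmxZ -E !trmx_mul trmxK mulmxA.
apply: contra dM => /eqP dN.
have := congr1 determinant E2.
rewrite detZ dN mulr0 !det_mulmx det_tr => /eqP.
by rewrite !mulf_eq0 (negbTE d0) /= orbF.
Qed.

Lemma R_sym (C : numClosedFieldType) (M N : 'M[C]_3) :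
  R M N -> N^T = N -> M^T = M.
Proof.
move=> [g [l [gu l0 E]]] sN.
have gtu : g^T \in unitmx by rewrite unitmx_tr.
have E2 : g *m M^T *m g^T = g *m M *m g^T.
  have <- : (g *m M *m g^T)^T = g *m M^T *m g^T by rewrite !trmx_mul trmxK mulmxA.
  by rewrite E trmxZ sN.
have := congr1 (fun X => invmx g *m X *m invmx g^T) E2.
by rewrite /= !mulmxA !mulVmx // !mul1mx -!mulmxA !mulmxV // !mulmx1.
Qed.



Definition Jf (C : numClosedFieldType) (M : 'M[C]_3) : C :=
  let w0 := M i2 i1 - M i1 i2 in
  let w1 := M i0 i2 - M i2 i0 in
  let w2 := M i1 i0 - M i0 i1 in
  w0 * w0 * (M i0 i0 + M i0 i0) + w0 * w1 * (M i0 i1 + M i1 i0) + w0 * w2 * (M i0 i2 + M i2 i0) +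
  w1 * w0 * (M i1 i0 + M i0 i1) + w1 * w1 * (M i1 i1 + M i1 i1) + w1 * w2 * (M i1 i2 + M i2 i1) +
  w2 * w0 * (M i2 i0 + M i0 i2) + w2 * w1 * (M i2 i1 + M i1 i2) + w2 * w2 * (M i2 i2 + M i2 i2).

Lemma Jf_cong (C : numClosedFieldType) (a b c d e f g h k m00 m01 m02 m10 m11 m12 m20 m21 m22 : C) :
  let G := mx3 [:: [:: a; b; c]; [:: d; e; f]; [:: g; h; k]] in
  let M := mx3 [:: [:: m00; m01; m02]; [:: m10; m11; m12]; [:: m20; m21; m22]] in
  Jf (G *m M *m G^T) = (\det G) ^+ 2 * Jf M.
Proof.
rewrite /= tr_mx3 !mul_mx3 det_mx3 /Jf !mxE /=.
ring.
Qed.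

Lemma Jf_congG (C : numClosedFieldType) (G M : 'M[C]_3) :
  Jf (G *m M *m G^T) = (\det G) ^+ 2 * Jf M.
Proof. by rewrite (mx3_eta G) (mx3_eta M) Jf_cong. Qed.

Lemma Jf_scale (C : numClosedFieldType) (x : C) (M : 'M[C]_3) :
  Jf (x *: M) = x ^+ 3 * Jf M.
Proof. rewrite /Jf !mxE; ring. Qed.

Definition Df (C : numClosedFieldType) (M : 'M[C]_3) : C := \det (M + M^T).

Lemma Df_congG (C : numClosedFieldType) (G M : 'M[C]_3) :
  Df (G *m M *m G^T) = (\det G) ^+ 2 * Df M.
Proof.
rewrite /Df !trmx_mul trmxK mulmxA -mulmxDl -mulmxDr !det_mulmx det_tr.
by rewrite mulrC mulrA -expr2.
Qed.

Lemma Df_scale (C : numClosedFieldType) (x : C) (M : 'M[C]_3) :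
  Df (x *: M) = x ^+ 3 * Df M.
Proof. by rewrite /Df trmxZ -scalerDr detZ. Qed.

Lemma E_inv (C : numClosedFieldType) (M N : 'M[C]_3) :
  prod_equiv M N -> Jf N * Df M = Jf M * Df N.
Proof.
move=> [g [gu ->]]; rewrite /prod_act Jf_scale Df_scale Jf_congG Df_congG.
ring.
Qed.

Lemma Jf_mu1 (C : numClosedFieldType) (a : C) : Jf (mu1 a) = 8 * a ^+ 2.
Proof. rewrite /Jf /mu1 !mxE /=; ring. Qed.
Lemma Df_mu1 (C : numClosedFieldType) (a : C) : Df (mu1 a) = 8.
Proof. rewrite /Df /mu1 tr_mx3 add_mx3 det_mx3; ring. Qed.
Lemma Jf_mu2 (C : numClosedFieldType) : Jf (mu2 C) = 0.
Proof. rewrite /Jf /mu2 !mxE /=; ring. Qed.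
Lemma Df_mu2 (C : numClosedFieldType) : Df (mu2 C) = 8.
Proof. rewrite /Df /mu2 id_mx3 tr_mx3 add_mx3 det_mx3; ring. Qed.
Lemma Jf_mu3 (C : numClosedFieldType) : Jf (mu3 C) = 0.
Proof. rewrite /Jf /mu3 !mxE /=; ring. Qed.
Lemma Df_mu3 (C : numClosedFieldType) : Df (mu3 C) = -8.
Proof. rewrite /Df /mu3 tr_mx3 add_mx3 det_mx3; ring. Qed.

Lemma nat_neq0 (C : numClosedFieldType) (n : nat) : (n.+1%:R : C) != 0.
Proof. by rewrite pnatr_eq0. Qed.

Lemma U12 (C : numClosedFieldType) (a : C) : a != 0 -> ~ prod_equiv (mu1 a) (mu2 C).
Proof.
move=> a0 /E_inv; rewrite Jf_mu1 Jf_mu2 Df_mu1 Df_mu2 mul0r => /esym/eqP.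
by rewrite !mulf_eq0 (negbTE a0) pnatr_eq0.
Qed.

Lemma U13 (C : numClosedFieldType) (a : C) : a != 0 -> ~ prod_equiv (mu1 a) (mu3 C).
Proof.
move=> a0 /E_inv; rewrite Jf_mu1 Jf_mu3 Df_mu1 Df_mu3 mul0r => /esym/eqP.
by rewrite mulrN oppr_eq0 !mulf_eq0 (negbTE a0) pnatr_eq0.
Qed.

Lemma U23 (C : numClosedFieldType) : ~ prod_equiv (mu2 C) (mu3 C).
Proof.
move=> [g [gu E]].
have : (mu3 C)^T = mu3 C.
  by rewrite E /prod_act trmxZ /mu2 mulmx1 trmx_mul trmxK.
move/matrixP => /(_ i1 i2); rewrite !mxE /= => /eqP.
rewrite -subr_eq0 opprK -(natrD C 1 1) pnatr_eq0 //.
Qed.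

Lemma U11 (C : numClosedFieldType) (a a' : C) : a != 0 -> a' != 0 ->
  (prod_equiv (mu1 a) (mu1 a') <-> (a = a' \/ a = - a')).
Proof.
move=> a0 a'0; split.
  move=> /E_inv; rewrite !Jf_mu1 !Df_mu1 => E.
  have : (a - a') * (a + a') = 0.
    apply: (mulfI (nat_neq0 C 63)); rewrite mulr0.
    have -> : 64 * ((a - a') * (a + a')) = 8 * a ^+ 2 * 8 - 8 * a' ^+ 2 * 8 by ring.
    by rewrite E subrr.
  move/eqP; rewrite mulf_eq0 subr_eq0 addr_eq0 => /orP[/eqP|/eqP]; by [left|right].
case=> ->.
  exists 1%:M; split; first by rewrite unitmx1.
  by rewrite /prod_act det1 invr1 scale1r mul1mx trmx1 mulmx1.
exists (mx3 [:: [:: -1; 0; 0]; [:: 0; 1; 0]; [:: 0; 0; -1]]); split.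
  rewrite unitmxE det_mx3 unitfE; apply: contra (oner_neq0 C) => /eqP <-; apply/eqP; ring.
rewrite /prod_act /mu1 det_mx3 tr_mx3 !mul_mx3 scale_mx3 opprK.
apply: mx3_congr; by field.
Qed.



Lemma unit_mx3 (C : numClosedFieldType) (a b c d e f g h k : C) :
  a*e*k - a*f*h - b*d*k + b*f*g + c*d*h - c*e*g != 0 ->
  mx3 [:: [:: a; b; c]; [:: d; e; f]; [:: g; h; k]] \in unitmx.
Proof. by rewrite unitmxE det_mx3 unitfE. Qed.

Lemma caseE (C : numClosedFieldType) (p al f h rho : C) :
  p != 0 -> al != 0 -> rho != 0 ->
  R (mx3 [:: [:: p; 0; 0]; [:: 0; al^+2 * p; f];
             [:: 0; h; (rho^+2 + (f+h)^+2) / (4 * (al^+2 * p))]])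
    (mu1 ((h - f) / rho)).
Proof.
move=> p0 al0 rho0.
have e0 : al ^+ 2 * p != 0 by rewrite mulf_neq0 // expf_neq0.
exists (mx3 [:: [:: al; 0; 0]; [:: 0; 1; 0];
                [:: 0; - (f+h) / rho; 2 * (al^+2 * p) / rho]]), (al^+2 * p).
split => //.
  apply: unit_mx3.
  have -> : al * 1 * (2 * (al ^+ 2 * p) / rho) - al * 0 * (- (f + h) / rho) - 0 * 0 * (2 * (al ^+ 2 * p) / rho) +
    0 * 0 * 0 + 0 * 0 * (- (f + h) / rho) - 0 * 1 * 0 = 2 * al^+3 * p / rho by field.
  by rewrite !mulf_neq0 ?invr_eq0 ?expf_neq0 ?pnatr_eq0.
rewrite /mu1 tr_mx3 !mul_mx3 scale_mx3.
apply: mx3_congr; field. all: rewrite ?p0 ?al0 ?rho0. all: done.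
Qed.

Ltac side := repeat (apply/andP; split); try done; try assumption; try (by rewrite pnatr_eq0).

Lemma Df_block (C : numClosedFieldType) (p e f h k : C) :
  Df (mx3 [:: [:: p; 0; 0]; [:: 0; e; f]; [:: 0; h; k]]) = 2 * p * (4 * e * k - (f + h) ^+ 2).
Proof. rewrite /Df tr_mx3 add_mx3 det_mx3; ring. Qed.

Lemma mu1_0 (C : numClosedFieldType) : mu1 (0 : C) = mu2 C.
Proof. by rewrite /mu1 /mu2 id_mx3 oppr0. Qed.

Definition ABres (C : numClosedFieldType) (N : 'M[C]_3) :=
  (exists2 a : C, a != 0 & R N (mu1 a)) \/ R N (mu2 C).

Lemma ABres_mu1 (C : numClosedFieldType) (N : 'M[C]_3) a : R N (mu1 a) -> ABres N.
Proof.
have [-> | a0] := eqVneq a 0; first by rewrite mu1_0; right.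
by move=> H; left; exists a.
Qed.

Lemma ABres_trans (C : numClosedFieldType) (M N : 'M[C]_3) : R M N -> ABres N -> ABres M.
Proof.
move=> H [[a a0 H2]|H2]; [left; exists a => //|right]; exact: R_trans H2.
Qed.

Lemma sq_neq0 (C : numClosedFieldType) (x y : C) : x ^+ 2 = y -> y != 0 -> x != 0.
Proof. by move=> <-; apply: contra => /eqP ->; rewrite expr0n. Qed.

Lemma stageAB2e (C : numClosedFieldType) (p e f h k : C) :
  p != 0 -> e != 0 -> 4 * e * k - (f + h) ^+ 2 != 0 ->
  ABres (mx3 [:: [:: p; 0; 0]; [:: 0; e; f]; [:: 0; h; k]]).
Proof.
move=> p0 e0 D0.
set al := sqrtC (e / p); set rho := sqrtC (4 * e * k - (f + h) ^+ 2).
have al2 : al ^+ 2 = e / p by rewrite sqrtCK.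
have rho2 : rho ^+ 2 = 4 * e * k - (f + h) ^+ 2 by rewrite sqrtCK.
have al0 : al != 0 by apply: (sq_neq0 al2); rewrite mulf_neq0 // invr_eq0.
have rho0 : rho != 0 by apply: (sq_neq0 rho2).
have Ek : k = (rho^+2 + (f+h)^+2) / (4 * e).
  rewrite rho2; field; side.
have Ee : e = al ^+ 2 * p by rewrite al2; field; side.
apply: (@ABres_mu1 _ _ ((h - f) / rho)).
rewrite Ek Ee; exact: caseE.
Qed.

Lemma neq0_eq (C : numClosedFieldType) (x y : C) : x = y -> x != 0 -> y != 0.
Proof. by move=> ->. Qed.

Lemma stageAB2 (C : numClosedFieldType) (p e f h k : C) :
  p != 0 -> 4 * e * k - (f + h) ^+ 2 != 0 ->
  ABres (mx3 [:: [:: p; 0; 0]; [:: 0; e; f]; [:: 0; h; k]]).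
Proof.
move=> p0 D0.
have [e0|e0] := eqVneq e 0; last exact: stageAB2e.
have [k0|k0] := eqVneq k 0.
  pose G : 'M[C]_3 := mx3 [:: [:: 1; 0; 0]; [:: 0; 1; 1]; [:: 0; 0; 1]].
  have Gu : G \in unitmx by apply: unit_mx3; rewrite !(mul0r, mulr0, mulr1, subr0, addr0) oner_eq0.
  apply: (ABres_trans (R_self _ Gu)).
  rewrite /G tr_mx3 !mul_mx3.
  rewrite e0 k0 in D0 *.
  set N := mx3 _.
  have -> : N = mx3 [:: [:: p; 0; 0]; [:: 0; f + h; f]; [:: 0; h; 0]].
    by rewrite /N; apply: mx3_congr; ring.
  apply: stageAB2e => //.
    by apply: contra D0 => /eqP H; apply/eqP; rewrite H; ring.
  by apply: (neq0_eq _ D0); ring.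
pose G : 'M[C]_3 := mx3 [:: [:: 1; 0; 0]; [:: 0; 0; 1]; [:: 0; 1; 0]].
have Gu : G \in unitmx.
  apply: unit_mx3; rewrite !(mul0r, mulr0, mulr1, mul1r, subr0, addr0, sub0r, add0r) oppr_eq0 oner_eq0 //.
apply: (ABres_trans (R_self _ Gu)).
rewrite /G tr_mx3 !mul_mx3.
set N := mx3 _.
have -> : N = mx3 [:: [:: p; 0; 0]; [:: 0; k; h]; [:: 0; f; e]].
  by rewrite /N; apply: mx3_congr; ring.
apply: stageAB2e => //.
by apply: (neq0_eq _ D0); ring.
Qed.

Lemma stageAB1 (C : numClosedFieldType) (p b c e f h k : C) :
  p != 0 -> Df (mx3 [:: [:: p; b; c]; [:: b; e; f]; [:: c; h; k]]) != 0 ->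
  ABres (mx3 [:: [:: p; b; c]; [:: b; e; f]; [:: c; h; k]]).
Proof.
move=> p0 D0.
pose G : 'M[C]_3 := mx3 [:: [:: 1; 0; 0]; [:: - b / p; 1; 0]; [:: - c / p; 0; 1]].
have Gu : G \in unitmx.
  apply: unit_mx3; apply: (@neq0_eq _ 1); [ring | exact: oner_neq0].
have HR := R_self (mx3 [:: [:: p; b; c]; [:: b; e; f]; [:: c; h; k]]) Gu.
have HN : G *m mx3 [:: [:: p; b; c]; [:: b; e; f]; [:: c; h; k]] *m G^T =
   mx3 [:: [:: p; 0; 0]; [:: 0; e - b^+2/p; f - b*c/p]; [:: 0; h - b*c/p; k - c^+2/p]].
  rewrite /G tr_mx3 !mul_mx3; apply: mx3_congr; field; side.
rewrite HN in HR.
apply: (ABres_trans HR); apply: stageAB2 => //.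
have := R_nondeg HR D0; rewrite -/(Df _) Df_block.
by rewrite !mulf_eq0 negb_or => /andP[_].
Qed.

Lemma stageC (C : numClosedFieldType) (r s al be ga de : C) :
  Df (mx3 [:: [:: 0; r; s]; [:: r; al; be]; [:: s; ga; de]]) != 0 -> ga != be ->
  R (mx3 [:: [:: 0; r; s]; [:: r; al; be]; [:: s; ga; de]]) (mu3 C).
Proof.
move=> D0 gb.
have HD : Df (mx3 [:: [:: 0; r; s]; [:: r; al; be]; [:: s; ga; de]]) =
   - 8 * (al * s^+2 - (be + ga) * r * s + de * r^+2).
  rewrite /Df tr_mx3 add_mx3 det_mx3; ring.
have Q0 : al * s^+2 - (be + ga) * r * s + de * r^+2 != 0.
  by move: D0; rewrite HD mulf_eq0 negb_or => /andP[_].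
have k0 : ga - be != 0 by rewrite subr_eq0.
pose y2 := (be+ga)*s - 2*de*r.
pose y3 := (be+ga)*r - 2*al*s.
pose x := (al*y2^+2 + (be+ga)*y2*y3 + de*y3^+2) / (4 * (al * s^+2 - (be + ga) * r * s + de * r^+2)).
exists (mx3 [:: [:: - (ga - be) / 2; 0; 0]; [:: x / (ga - be); y2 / (ga - be); y3 / (ga - be)];
                [:: 0; s; - r]]), (al * s^+2 - (be + ga) * r * s + de * r^+2).
split => //.
  apply: unit_mx3.
  apply: (@neq0_eq _ (- (al * s^+2 - (be + ga) * r * s + de * r^+2))); last by rewrite oppr_eq0.
  rewrite /y2 /y3; field; side.
rewrite /mu3 tr_mx3 !mul_mx3 scale_mx3 /x /y2 /y3.
apply: mx3_congr; field; side.
Qed.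



Lemma stageAB1' (C : numClosedFieldType) (N : 'M[C]_3) :
  N i0 i0 != 0 -> N i0 i1 = N i1 i0 -> N i0 i2 = N i2 i0 -> Df N != 0 -> ABres N.
Proof.
move=> H0 H1 H2 D; rewrite (mx3_eta N) in D *; rewrite -H1 -H2 in D *.
exact: stageAB1.
Qed.

Lemma stageC' (C : numClosedFieldType) (N : 'M[C]_3) :
  N i0 i0 = 0 -> N i0 i1 = N i1 i0 -> N i0 i2 = N i2 i0 -> Df N != 0 ->
  N i2 i1 != N i1 i2 -> R N (mu3 C).
Proof.
move=> H0 H1 H2 D H3; rewrite (mx3_eta N) in D *; rewrite -H1 -H2 H0 in D *.
exact: stageC.
Qed.

Lemma sym_entries (C : numClosedFieldType) (N : 'M[C]_3) :
  N i0 i1 = N i1 i0 -> N i0 i2 = N i2 i0 -> N i1 i2 = N i2 i1 -> N^T = N.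
Proof.
move=> H1 H2 H3; rewrite (mx3_eta N) tr_mx3.
by rewrite H1 H2 H3.
Qed.

Definition qf (C : numClosedFieldType) (M : 'M[C]_3) (u0 u1 u2 : C) : C :=
  u0 * M i0 i0 * u0 + u0 * M i0 i1 * u1 + u0 * M i0 i2 * u2 +
  u1 * M i1 i0 * u0 + u1 * M i1 i1 * u1 + u1 * M i1 i2 * u2 +
  u2 * M i2 i0 * u0 + u2 * M i2 i1 * u1 + u2 * M i2 i2 * u2.

Lemma N00 (C : numClosedFieldType) (G M : 'M[C]_3) :
  (G *m M *m G^T) i0 i0 = qf M (G i0 i0) (G i0 i1) (G i0 i2).
Proof. rewrite /qf (mx3_eta G) (mx3_eta M) tr_mx3 !mul_mx3 !mxE /=; ring. Qed.

Lemma Nw (C : numClosedFieldType) (G M : 'M[C]_3) :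
  G i0 i0 = M i2 i1 - M i1 i2 -> G i0 i1 = M i0 i2 - M i2 i0 -> G i0 i2 = M i1 i0 - M i0 i1 ->
  (G *m M *m G^T) i0 i1 = (G *m M *m G^T) i1 i0 /\
  (G *m M *m G^T) i0 i2 = (G *m M *m G^T) i2 i0.
Proof.
move=> h0 h1 h2.
rewrite (mx3_eta G) (mx3_eta M) tr_mx3 !mul_mx3 !mxE /= h0 h1 h2.
split; ring.
Qed.

Lemma Nsym (C : numClosedFieldType) (G M : 'M[C]_3) :
  M^T = M -> (G *m M *m G^T)^T = G *m M *m G^T.
Proof. by move=> sM; rewrite !trmx_mul trmxK sM mulmxA. Qed.

Lemma trE (C : numClosedFieldType) (N : 'M[C]_3) i j : N^T = N -> N i j = N j i.
Proof. by move=> h; rewrite -{1}h mxE. Qed.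

Lemma basis_complete (C : numClosedFieldType) (u0 u1 u2 : C) :
  [|| u0 != 0, u1 != 0 | u2 != 0] ->
  exists G : 'M[C]_3, [/\ G \in unitmx, G i0 i0 = u0, G i0 i1 = u1 & G i0 i2 = u2].
Proof.
case/or3P => h.
- exists (mx3 [:: [:: u0; u1; u2]; [:: 0; 1; 0]; [:: 0; 0; 1]]); rewrite !mxE; split => //.
  apply: unit_mx3; apply: (neq0_eq _ h); ring.
- exists (mx3 [:: [:: u0; u1; u2]; [:: 1; 0; 0]; [:: 0; 0; 1]]); rewrite !mxE; split => //.
  apply: unit_mx3; apply: (@neq0_eq _ (- u1)); [ring | by rewrite oppr_eq0].
- exists (mx3 [:: [:: u0; u1; u2]; [:: 1; 0; 0]; [:: 0; 1; 0]]); rewrite !mxE; split => //.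
  apply: unit_mx3; apply: (neq0_eq _ h); ring.
Qed.

Lemma u_nz (C : numClosedFieldType) (M : 'M[C]_3) u0 u1 u2 :
  qf M u0 u1 u2 != 0 -> [|| u0 != 0, u1 != 0 | u2 != 0].
Proof.
apply: contraLR; rewrite !negb_or !negbK => /and3P[/eqP-> /eqP-> /eqP->].
apply/eqP; rewrite /qf; ring.
Qed.

Lemma stepAB (C : numClosedFieldType) (M : 'M[C]_3) u0 u1 u2 :
  qf M u0 u1 u2 != 0 -> Df M != 0 ->
  M^T = M \/ [/\ u0 = M i2 i1 - M i1 i2, u1 = M i0 i2 - M i2 i0 & u2 = M i1 i0 - M i0 i1] ->
  ABres M.
Proof.
move=> hq D hs.
have [G [Gu g0 g1 g2]] := basis_complete (u_nz hq).
have HR := R_self M Gu.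
apply: (ABres_trans HR); apply: stageAB1'.
- by rewrite N00 g0 g1 g2.
- case: hs => [sM|[h0 h1 h2]]; first exact: (trE _ _ (Nsym G sM)).
  by case: (Nw (etrans g0 h0) (etrans g1 h1) (etrans g2 h2)).
- case: hs => [sM|[h0 h1 h2]]; first exact: (trE _ _ (Nsym G sM)).
  by case: (Nw (etrans g0 h0) (etrans g1 h1) (etrans g2 h2)).
- exact: R_nondeg HR D.
Qed.

Lemma stepC (C : numClosedFieldType) (M : 'M[C]_3) :
  let u0 := M i2 i1 - M i1 i2 in let u1 := M i0 i2 - M i2 i0 in let u2 := M i1 i0 - M i0 i1 in
  [|| u0 != 0, u1 != 0 | u2 != 0] -> qf M u0 u1 u2 = 0 -> Df M != 0 -> R M (mu3 C).
Proof.
move=> u0 u1 u2 hu hq D.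
have [G [Gu g0 g1 g2]] := basis_complete hu.
have HR := R_self M Gu.
have [s1 s2] := Nw g0 g1 g2.
apply: (R_trans HR); apply: stageC' => //.
- by rewrite N00 g0 g1 g2.
- exact: R_nondeg HR D.
apply/negP => /eqP s3.
have sN := sym_entries s1 s2 (esym s3).
have sM := R_sym HR sN.
move: hu; rewrite /u0 /u1 /u2 (trE i2 i1 sM) (trE i0 i2 sM) (trE i1 i0 sM).
by rewrite !subrr eqxx.
Qed.

Lemma two_neq0 (C : numClosedFieldType) (x : C) : x != 0 -> 2 * x != 0.
Proof. by move=> h; rewrite mulf_neq0 // pnatr_eq0. Qed.

Lemma existence (C : numClosedFieldType) (M : 'M[C]_3) :
  Df M != 0 -> ABres M \/ R M (mu3 C).
Proof.
move=> D.
case: (boolP [|| M i2 i1 - M i1 i2 != 0, M i0 i2 - M i2 i0 != 0 | M i1 i0 - M i0 i1 != 0]) => hu.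
  have [hq|hq] := eqVneq (qf M (M i2 i1 - M i1 i2) (M i0 i2 - M i2 i0) (M i1 i0 - M i0 i1)) 0.
    by right; apply: stepC.
  by left; apply: (stepAB hq D); right.
move: hu; rewrite !negb_or !negbK !subr_eq0 => /and3P[/eqP e21 /eqP e02 /eqP e10].
have sM : M^T = M by apply: sym_entries.
left.
have [a0|a0] := eqVneq (M i0 i0) 0; last first.
  apply: (@stepAB _ _ 1 0 0) D (or_introl sM); apply: (neq0_eq _ a0); rewrite /qf; ring.
have [a1|a1] := eqVneq (M i1 i1) 0; last first.
  apply: (@stepAB _ _ 0 1 0) D (or_introl sM); apply: (neq0_eq _ a1); rewrite /qf; ring.
have [a2|a2] := eqVneq (M i2 i2) 0; last first.
  apply: (@stepAB _ _ 0 0 1) D (or_introl sM); apply: (neq0_eq _ a2); rewrite /qf; ring.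
have [b1|b1] := eqVneq (M i0 i1) 0; last first.
  apply: (@stepAB _ _ 1 1 0) D (or_introl sM); apply: (neq0_eq _ (two_neq0 b1)).
  rewrite /qf e10 a0 a1; ring.
have [b2|b2] := eqVneq (M i0 i2) 0; last first.
  apply: (@stepAB _ _ 1 0 1) D (or_introl sM); apply: (neq0_eq _ (two_neq0 b2)).
  rewrite /qf -e02 a0 a2; ring.
have [b3|b3] := eqVneq (M i1 i2) 0; last first.
  apply: (@stepAB _ _ 0 1 1) D (or_introl sM); apply: (neq0_eq _ (two_neq0 b3)).
  rewrite /qf e21 a1 a2; ring.
move: D; rewrite /Df (mx3_eta M) tr_mx3 add_mx3 det_mx3.
rewrite e10 -e02 e21 a0 a1 a2 b1 b2 b3.
by rewrite !(addr0, mulr0, mul0r, subr0) eqxx.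
Qed.


Lemma nondeg_Df (C : numClosedFieldType) (M : 'M[C]_3) : prod_nondeg M -> Df M != 0.
Proof.
rewrite /prod_nondeg unitmxE detZ unitfE mulf_eq0 negb_or => /andP[_].
by rewrite /Df.
Qed.

Theorem proposition2p2 (C : numClosedFieldType) :
  (* existence: every non-degenerate product is equivalent to a normal form *)
  (forall M : 'M[C]_3, prod_nondeg M ->
     (exists2 a : C, a != 0 & prod_equiv M (mu1 a))
     \/ prod_equiv M (mu2 C) \/ prod_equiv M (mu3 C)) /\
  (* uniqueness: the three families are pairwise inequivalent *)
  (forall a : C, a != 0 -> ~ prod_equiv (mu1 a) (mu2 C)) /\
  (forall a : C, a != 0 -> ~ prod_equiv (mu1 a) (mu3 C)) /\
  ~ prod_equiv (mu2 C) (mu3 C) /\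
  (* within the family mu_{1;a} *)
  (forall a a' : C, a != 0 -> a' != 0 ->
     (prod_equiv (mu1 a) (mu1 a') <-> (a = a' \/ a = - a'))).
Proof.
split.
  move=> M /nondeg_Df /existence [[[a a0 H]|H]|H].
  - by left; exists a => //; apply: RtoE.
  - by right; left; apply: RtoE.
  - by right; right; apply: RtoE.
split; first exact: U12.
split; first exact: U13.
split; first exact: U23.
exact: U11.
Qed.
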